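(* Let $n\ge 3$ and let $\lambda,\mu$ be integers with $1\le \mu\le \lambda$ and $\lambda+\mu\le n-1$. Let $K_n^{-}(\lambda,\mu)$ denote the graph obtained from the complete graph $K_n$ by removing all edges of a subgraph isomorphic to the complete bipartite graph $K_{\lambda,\mu}$. Then $$\dim_l(K_n^{-}(\lambda,\mu))=\begin{cases} n-2, & \mu=1,\\ n-3, & \mu\ge 2.\end{cases}$$
   Context: All graphs are finite, simple and connected. For vertices $x,y$ of a graph $G$, $d_G(x,y)$ is the length of a shortest $x,y$-path. A vertex $w$ distinguishes vertices $u,v$ if $d_G(u,w)\neq d_G(v,w)$. A set $W\subseteq V(G)$ is a local resolving set of $G$ if for every pair of adjacent vertices $u,v\in V(G)\setminus W$ some vertex of $W$ distinguishes $u$ and $v$. The local metric dimension $\dim_l(G)$ is the minimum cardinality of a local resolving set of $G$. The graph $K_n^{-}(\lambda,\mu)$ does not depend (up to isomorphism) on the choice of the removed $K_{\lambda,\mu}$. *)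

(* Defs.v *)
From mathcomp Require Import all_boot all_order.
Set Implicit Arguments. Unset Strict Implicit. Unset Printing Implicit Defensive.

Fixpoint ball (T : finType) (e : rel T) (k : nat) (x : T) : {set T} :=
  match k with
  | 0 => [set x]
  | k'.+1 => ball e k' x :|: [set y | [exists z in ball e k' x, e z y]]
  end.

(* Graph distance d_G(x,y): least k with y within distance k of x
   (returns #|T| if y is unreachable; irrelevant for connected graphs). *)
Definition gdist (T : finType) (e : rel T) (x y : T) : nat :=
  find (fun k => y \in ball e k x) (iota 0 #|T|).

Definition local_resolving (T : finType) (e : rel T) (W : {set T}) : bool :=
  [forall u, forall v,
     ((u \notin W) && (v \notin W) && e u v) ==>
     [exists w in W, gdist e u w != gdist e v w]].

(* Local metric dimension: minimum cardinality of a local resolving set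
   (the whole vertex set is always one, so #|T| is a valid default). *)
Definition ldim (T : finType) (e : rel T) : nat :=
  \big[minn/#|T|]_(W : {set T} | local_resolving e W) #|W|.

(* K_n^-(A,B): complete graph on 'I_n with all edges between the disjoint
   vertex sets A and B removed (i.e. a K_{|A|,|B|} removed). *)
Definition Kminus_rel (n : nat) (A B : {set 'I_n}) : rel 'I_n :=
  fun x y => (x != y) &&
    ~~ (((x \in A) && (y \in B)) || ((x \in B) && (y \in A))).

(* Main.v *)
Require Import Defs.
From mathcomp Require Import all_boot all_order.
From mathcomp Require Import zify.

Set Implicit Arguments. Unset Strict Implicit. Unset Printing Implicit Defensive.

Lemma bigmin_le_seq (I : eqType) (s : seq I) (F : I -> nat) m j :
  j \in s -> \big[minn/m]_(i <- s) F i <= F j.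
Proof.
elim: s => [|x s IH] //; rewrite big_cons in_cons => /orP [/eqP ->|/IH h].
  exact: geq_minl.
by rewrite geq_min h orbT.
Qed.

Lemma bigmin_le (I : finType) (P : pred I) (F : I -> nat) m j :
  P j -> \big[minn/m]_(i | P i) F i <= F j.
Proof.
move=> Pj; rewrite -big_filter; apply: bigmin_le_seq.
by rewrite mem_filter Pj mem_index_enum.
Qed.

Lemma bigmin_ge (I : finType) (P : pred I) (F : I -> nat) m k :
  k <= m -> (forall i, P i -> k <= F i) -> k <= \big[minn/m]_(i | P i) F i.
Proof.
move=> km kF; apply: (big_ind (fun x => k <= x)) => //.
  by move=> x y hx hy; rewrite leq_min hx hy.
Qed.

Lemma ar1 l m k : 1 <= m -> m <= l -> m <> 1 -> l = true + k -> 0 < k.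
Proof. lia. Qed.

Lemma ar2 w u p1 p2 p3 N : u = p1 + p2 + p3 -> p1 <= 1 -> p2 <= 1 -> p3 <= 1 ->
  w + u = N -> N - 3 <= w.
Proof. lia. Qed.

Lemma ar3 w u p1 p2 p3 N : u = p1 + p2 + p3 -> p1 <= 1 -> p2 <= 1 -> p3 <= 1 ->
  w + u = N -> (p1 = 0 \/ p2 = 0 \/ p3 = 0) -> N - 2 <= w.
Proof. lia. Qed.

Section S.
Variables (n : nat) (A B : {set 'I_n}).

Definition dist (x y : 'I_n) := if x == y then 0 else if Kminus_rel A B x y then 1 else 2.

Lemma iota3 m : 3 <= m -> iota 0 m = 0 :: 1 :: 2 :: iota 3 (m - 3).
Proof. by case: m => [|[|[|m]]] // _; rewrite /= !subSS subn0. Qed.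

Lemma ball1 (x y : 'I_n) : y \in ball (Kminus_rel A B) 1 x = (y == x) || Kminus_rel A B x y.
Proof.
rewrite /= in_setU in_set1 inE; congr orb.
apply/existsP/idP => [[z /andP [/set1P -> //]]|h].
by exists x; rewrite in_set1 eqxx.
Qed.

Lemma gdistE (c : 'I_n) : 3 <= n -> c \notin A -> c \notin B ->
  forall x y, gdist (Kminus_rel A B) x y = dist x y.
Proof.
move=> h3 cA cB x y.
rewrite /gdist card_ord iota3 //= in_set1 ball1 /dist (eq_sym y x).
have Kc : forall z, Kminus_rel A B z c = (z != c).
  by move=> z; rewrite /Kminus_rel (negbTE cA) (negbTE cB) !andbF orbF andbT.
have Kc' : forall z, Kminus_rel A B c z = (z != c).
  by move=> z; rewrite /Kminus_rel (negbTE cA) (negbTE cB) eq_sym /= andbT.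
case: eqP => //= xy.
case Kxy: (Kminus_rel A B x y) => //=.
suff -> : y \in ball (Kminus_rel A B) 2 x by [].
rewrite /= in_setU; apply/orP; right; rewrite inE; apply/existsP; exists c.
rewrite -/(ball (Kminus_rel A B) 1 x) ball1 Kc Kc'.
case: (eqVneq x c) => [exc|xc]; first by exfalso; move: Kxy; rewrite exc Kc' => /negbT; rewrite negbK => /eqP eyc; apply: xy; rewrite exc eyc.
have [eyc|yc] := eqVneq y c; last by apply/andP; split; [apply/orP; right|].
by exfalso; move: Kxy; rewrite eyc Kc => /negbT /negP; apply.
Qed.

Lemma dist_same (u v w : 'I_n) : (u \in A) = (v \in A) -> (u \in B) = (v \in B) ->
  w != u -> w != v -> dist u w = dist v w.
Proof.
move=> hA hB wu wv.
have uw : (u == w) = false by rewrite eq_sym (negbTE wu).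
have vw : (v == w) = false by rewrite eq_sym (negbTE wv).
by rewrite /dist /Kminus_rel uw vw hA hB.
Qed.

End S.

Theorem lemma2p1 (n lambda mu : nat) (A B : {set 'I_n}) :
  3 <= n -> 1 <= mu -> mu <= lambda -> lambda + mu <= n - 1 ->
  [disjoint A & B] -> #|A| = lambda -> #|B| = mu ->
  ldim (Kminus_rel A B) = (if mu == 1 then n - 2 else n - 3).
Proof.
move=> h3 hmu hml hsum dAB cA cB.
have [c Hc] : exists c, c \in ~: (A :|: B).
  apply/card_gt0P; have := cardsC (A :|: B).
  rewrite cardsU (disjoint_setI0 dAB) cards0 card_ord cA cB; lia.
have [cA' cB'] : c \notin A /\ c \notin B.
  by move: Hc; rewrite in_setC in_setU negb_or => /andP[].
have dE := gdistE h3 cA' cB'.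
have disj : forall x, x \in A -> (x \in B) = false by move=> x; apply: disjointFr.
have res : forall W u v, local_resolving (Kminus_rel A B) W -> u \notin W -> v \notin W ->
    Kminus_rel A B u v -> exists2 w, w \in W & dist A B u w != dist A B v w.
  move=> W u v /forallP /(_ u) /forallP /(_ v) H uW vW Kuv.
  move: H; rewrite uW vW Kuv /= => /existsP [w /andP [wW]]; rewrite !dE => h.
  by exists w.
have mk : forall W : {set 'I_n}, (forall u v, u \notin W -> v \notin W -> Kminus_rel A B u v ->
    exists2 w, w \in W & dist A B u w != dist A B v w) -> local_resolving (Kminus_rel A B) W.
  move=> W H; apply/forallP => u; apply/forallP => v; apply/implyP => /andP [/andP [uW vW] Kuv].
  have [w wW hw] := H u v uW vW Kuv; apply/existsP; exists w; by rewrite wW !dE.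
have noclash : forall (W : {set 'I_n}) u v, local_resolving (Kminus_rel A B) W -> u \notin W -> v \notin W ->
    (u \in A) = (v \in A) -> (u \in B) = (v \in B) -> u = v.
  move=> W u v LR uW vW hA hB; apply/eqP; apply: contraT => uv.
  have Kuv : Kminus_rel A B u v.
    rewrite /Kminus_rel uv /= -hA -hB.
    by case: (boolP (u \in A)) => uA; rewrite ?(disj _ uA) //= andbF.
  have [w wW] := res W u v LR uW vW Kuv.
  have wu : w != u by apply: (contraNneq _ uW) => <-.
  have wv : w != v by apply: (contraNneq _ vW) => <-.
  by rewrite (dist_same hA hB wu wv) eqxx.
have [a aA] : exists a, a \in A by apply/card_gt0P; lia.
have [b bB] : exists b, b \in B by apply/card_gt0P; lia.
have aB := disj _ aA.
have bA : (b \in A) = false by apply/negbTE/negP => /disj; rewrite bB.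
have ac : (a == c) = false by apply/negbTE; apply: (contraNneq _ cA') => <-.
have ca : (c == a) = false by rewrite eq_sym.
have bc : (b == c) = false by apply/negbTE; apply: (contraNneq _ cB') => <-.
have cb : (c == b) = false by rewrite eq_sym.
have ab : (a == b) = false by apply/negbTE; apply: (contraNneq _ (negbT aB)) => ->; rewrite bB.
have ba : (b == a) = false by rewrite eq_sym.
have cAf : (c \in A) = false by apply/negbTE.
have cBf : (c \in B) = false by apply/negbTE.
apply/eqP; rewrite eqn_leq; apply/andP; split.
-
  case: eqP => [mu1|mun1].
  + set W0 := ~: [set a; c].
    have LR : local_resolving (Kminus_rel A B) W0.
      apply: mk => u v; rewrite !inE !negbK => hu hv Kuv.
      case/orP: hu => /eqP eu; case/orP: hv => /eqP ev; subst u v.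
      * by move: Kuv; rewrite /Kminus_rel eqxx.
      * exists b; first by rewrite !inE ba bc.
        by rewrite /dist /Kminus_rel ab cb aA bB aB bA cAf cBf.
      * exists b; first by rewrite !inE ba bc.
        by rewrite /dist /Kminus_rel ab cb aA bB aB bA cAf cBf.
      * by move: Kuv; rewrite /Kminus_rel eqxx.
    apply: leq_trans (bigmin_le _ _ LR) _.
    have h := cardsC [set a; c]; rewrite cards2 ac card_ord /= in h.
    rewrite /W0; move: h; move: (#|~: [set a; c]|) => k <-.
    by rewrite addKn.
  + have [a' a'A] : exists a', a' \in A :\ a.
      apply/card_gt0P; move: (cardsD1 a A); rewrite aA cA; exact: ar1 hmu hml mun1.
    have [b' b'B] : exists b', b' \in B :\ b.
      apply/card_gt0P; move: (cardsD1 b B); rewrite bB cB; exact: ar1 hmu (leqnn mu) mun1.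
    move: a'A b'B; rewrite !in_setD1 => /andP [a'a a'A] /andP [b'b b'B].
    have a'B := disj _ a'A.
    have b'A : (b' \in A) = false by apply/negbTE/negP => /disj; rewrite b'B.
    have a'c : (a' == c) = false by apply/negbTE; apply: (contraNneq _ cA') => <-.
    have b'c : (b' == c) = false by apply/negbTE; apply: (contraNneq _ cB') => <-.
    have a'b : (a' == b) = false by apply/negbTE; apply: (contraNneq _ (negbT a'B)) => ->; rewrite bB.
    have b'a : (b' == a) = false by apply/negbTE; apply: (contraNneq _ (negbT aB)) => <-; rewrite b'B.
    have a'af := negbTE a'a.
    have ab' : (a == b') = false by rewrite eq_sym.
    have cb' : (c == b') = false by rewrite eq_sym.
    have ba' : (b == a') = false by rewrite eq_sym.
    have ca' : (c == a') = false by rewrite eq_sym.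
    have b'bf := negbTE b'b.
    set W0 := ~: [set a; b; c].
    have LR : local_resolving (Kminus_rel A B) W0.
      apply: mk => u v; rewrite !inE !negbK => hu hv Kuv.
      case/orP: hu => [/orP []|] /eqP eu; case/orP: hv => [/orP []|] /eqP ev; subst u v;
      first [ by move: Kuv; rewrite /Kminus_rel ?eqxx ?aA ?bB ?aB ?bA ?cAf ?cBf /= ?andbF
            | (exists b'; [by rewrite !inE b'a b'bf b'c
                          | by rewrite /dist /Kminus_rel ab' cb' aA aB b'A b'B cAf cBf])
            | (exists a'; [by rewrite !inE a'af a'b a'c
                          | by rewrite /dist /Kminus_rel ba' ca' bA bB a'A a'B cAf cBf]) ].
    apply: leq_trans (bigmin_le _ _ LR) _.
    have h3c : #|[set a; b; c]| = 3 by rewrite -setUA cardsU1 cards2 !inE ab ac bc.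
    have h := cardsC [set a; b; c]; rewrite h3c card_ord in h.
    rewrite /W0; move: h; move: (#|~: [set a; b; c]|) => k <-.
    by rewrite addKn.
-
  apply: bigmin_ge; first by rewrite card_ord; case: (mu == 1); apply: leq_subr.
  move=> W LR.
  set U := ~: W.
  have HU : #|U| = #|U :&: A| + #|(U :\: A) :&: B| + #|(U :\: A) :\: B|.
    by rewrite -addnA cardsID cardsID.
  have H1 : #|U :&: A| <= 1.
    apply/card_le1_eqP => x y; rewrite !inE => /andP [xW xA] /andP [yW yA].
    by apply: (noclash W) => //; rewrite ?xA ?yA ?disj.
  have H2 : #|(U :\: A) :&: B| <= 1.
    apply/card_le1_eqP => x y; rewrite !inE => /andP [/andP [xA xW] xB] /andP [/andP [yA yW] yB].
    by apply: (noclash W) => //; rewrite ?xB ?yB ?(negbTE xA) ?(negbTE yA).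
  have H3 : #|(U :\: A) :\: B| <= 1.
    apply/card_le1_eqP => x y; rewrite !inE => /andP [xB /andP [xA xW]] /andP [yB /andP [yA yW]].
    by apply: (noclash W) => //; rewrite ?(negbTE xB) ?(negbTE yB) ?(negbTE xA) ?(negbTE yA).
  have HC := cardsC W; rewrite card_ord -/U in HC.
  case: eqP => [mu1|mun1]; last exact: ar2 HU H1 H2 H3 HC.
  apply: (ar3 HU H1 H2 H3 HC).
  case: (posnP #|U :&: A|) => [->|/card_gt0P [x1 hx1]]; first by left.
  case: (posnP #|(U :\: A) :&: B|) => [->|/card_gt0P [x2 hx2]]; first by right; left.
  case: (posnP #|(U :\: A) :\: B|) => [->|/card_gt0P [x3 hx3]]; first by right; right.
  exfalso.
  move: hx1 hx2 hx3; rewrite !inE => /andP [x1W x1A] /andP [/andP [x2A x2W] x2B] /andP [x3B /andP [x3A x3W]].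
  have Bs : forall w, w \in B -> w = x2.
    have : #|B| <= 1 by rewrite cB mu1.
    by move/card_le1_eqP => h w wB; apply: h.
  have K13 : Kminus_rel A B x1 x3.
    rewrite /Kminus_rel (negbTE x3B) (negbTE x3A) !andbF /= andbT.
    by apply: (contraNneq _ x3A) => <-; exact: x1A.
  have [w wW] := res W x1 x3 LR x1W x3W K13.
  have wB : (w \in B) = false.
    by apply/negbTE/negP => /Bs ew; move: wW; rewrite ew; apply/negP.
  have x1w : (x1 == w) = false by apply/negbTE; apply: (contraNneq _ x1W) => ->.
  have x3w : (x3 == w) = false by apply/negbTE; apply: (contraNneq _ x3W) => ->.
  by rewrite /dist /Kminus_rel x1w x3w wB (disj _ x1A) (negbTE x3A) (negbTE x3B) !andbF.
Qed.
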